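(* Let $n,m$ be positive integers. For $\lambda=(\lambda_1,\dots,\lambda_n)\in\mathcal{P}^m_n$ define integers $k_{i,j}(\lambda)$, $1\le i\le j\le n$, recursively (in order of decreasing $i$, and for fixed $i$ in order of decreasing $j$) by $$k_{i,j}(\lambda)=\min\left\{m,\left\lceil\frac{\lambda_i-\sum_{\ell=j+1}^n k_{i,\ell}(\lambda)+\sum_{\ell=i+1}^j k_{\ell,j}(\lambda)}{j-i+1}\right\rceil\right\}.$$ Then the map $\bar\varphi_n:\mathcal{P}^m_n\to\mathcal{T}^m_n$ sending $\lambda$ to the tableau $\{k_{i,j}(\lambda):1\le i\le j\le n\}$ is injective.
   Context: $\mathcal{P}^m_n$ is the set of integer partitions $(\lambda_1\ge\cdots\ge\lambda_n\ge0)$ with $\lambda_i\le m(n-i+1)$ for all $i$. $\mathcal{T}^m_n$ is the set of fillings of the staircase Young diagram of shape $(n,n-1,\dots,1)$ by integers in $\{0,1,\dots,m\}$, where the entry $k_{i,j}$ occupies the box in row $i$, column $n-j+1$ ($1\le i\le j\le n$). *)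

(* Defs.v *)
From mathcomp Require Import all_boot all_order all_algebra.
Set Implicit Arguments. Unset Strict Implicit. Unset Printing Implicit Defensive.
Import Order.TTheory GRing.Theory Num.Theory.

(* lambda_i (1-based) of a partition stored as an n-tuple *)
Definition part (n : nat) (lam : n.-tuple nat) (i : nat) : nat := nth 0%N lam i.-1.

Definition inP (n m : nat) (lam : n.-tuple nat) : Prop :=
  (forall i, (1 <= i < n)%N -> (part lam i.+1 <= part lam i)%N) /\
  (forall i, (1 <= i <= n)%N -> (part lam i <= m * (n - i + 1))%N).

Local Open Scope ring_scope.

Definition kval (n m : nat) (lam : n.-tuple nat) (f : nat -> nat -> int)
    (i j : nat) : int :=
  Num.min (m%:Z)
    (Num.ceil ((((part lam i)%:Z - \sum_(j.+1 <= l < n.+1) f i l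
                   + \sum_(i.+1 <= l < j.+1) f l j)%:~R : rat)
               / ((j - i + 1)%N%:R))).

Definition upd (f : nat -> nat -> int) (i j : nat) (v : int) : nat -> nat -> int :=
  fun a b => if (a == i) && (b == j) then v else f a b.

Fixpoint fillrow (n m : nat) (lam : n.-tuple nat) (f : nat -> nat -> int)
    (i t : nat) : nat -> nat -> int :=
  match t with
  | 0%N => f
  | t'.+1 => let g := @fillrow n m lam f i t' in
             upd g i (n - t') (@kval n m lam g i (n - t'))
  end.

Fixpoint filltab (n m : nat) (lam : n.-tuple nat) (t : nat) : nat -> nat -> int :=
  match t with
  | 0%N => fun _ _ => 0
  | t'.+1 => let g := @filltab n m lam t' in
             @fillrow n m lam g (n - t') (t'.+1)
  end.

(* k_{i,j}(lambda), meaningful for 1 <= i <= j <= n *)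
Definition kk (n m : nat) (lam : n.-tuple nat) (i j : nat) : int :=
  @filltab n m lam n i j.

(* Main.v *)
Require Import Defs.
From mathcomp Require Import all_boot all_order all_algebra zify.
Import Order.TTheory GRing.Theory Num.Theory.
Local Open Scope ring_scope.

Section Fill.
Variables (n m : nat) (lam : n.-tuple nat).

Lemma kval_ext f g a b :
  (forall l, (b < l <= n)%N -> f a l = g a l) ->
  (forall l, (a < l <= b)%N -> f l b = g l b) ->
  kval m lam f a b = kval m lam g a b.
Proof.
move=> h1 h2; rewrite /kval.
rewrite (eq_big_nat _ _ (F1 := fun l => f a l) (F2 := fun l => g a l)); last first.
  by move=> l /andP[hl1 hl2]; apply: h1; apply/andP; split => //.
rewrite (eq_big_nat _ _ (F1 := fun l => f l b) (F2 := fun l => g l b)); first by [].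
by move=> l /andP[hl1 hl2]; apply: h2; apply/andP; split => //.
Qed.

Lemma fillrow_out f i t a b :
  [|| a != i, (n < b)%N | (b + t <= n)%N] -> fillrow m lam f i t a b = f a b.
Proof.
elim: t => [|t IH] //= H.
rewrite /upd IH; last by move: H; case: (a != i) => //=; lia.
case: eqP => [ea|] //=; case: eqP => [eb|] //=.
by move: H; rewrite ea eqxx /= eb; lia.
Qed.

Lemma fillrow_rec g i s :
  (forall a b, (i < a)%N -> (a <= b <= n)%N -> g a b = kval m lam g a b) ->
  forall b, (n - s < b <= n)%N ->
  fillrow m lam g i s i b = kval m lam (fillrow m lam g i s) i b.
Proof.
move=> Hg; elim: s => [|s IH] b /=; first by lia.
move=> hb; rewrite {1}/upd eqxx /=.
have Hk : kval m lam (upd (fillrow m lam g i s) i (n - s)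
            (kval m lam (fillrow m lam g i s) i (n - s))) i b
        = kval m lam (fillrow m lam g i s) i b.
  apply: kval_ext => l hl; rewrite /upd.
    by case: eqP => //= _; case: eqP => //; lia.
  by case: eqP => //; lia.
rewrite Hk; case: eqP => [->|ne] //.
by apply: IH; lia.
Qed.

Lemma filltab_rec t : (t <= n)%N ->
  forall a b, (n - t < a)%N -> (a <= b <= n)%N ->
  filltab m lam t a b = kval m lam (filltab m lam t) a b.
Proof.
elim: t => [|t IH] ht a b ha hb; first by lia.
have -> : filltab m lam t.+1 = fillrow m lam (filltab m lam t) (n - t) t.+1 by [].
set g := filltab m lam t.
have Hg : forall a b, (n - t < a)%N -> (a <= b <= n)%N -> g a b = kval m lam g a b.
  by move=> *; apply: IH => //; lia.
have [ea|ne] := eqVneq a (n - t)%N.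
  subst a; apply: fillrow_rec; last by lia.
  by move=> a' b' h1 h2; apply: Hg => //; lia.
rewrite fillrow_out; last by rewrite ne.
rewrite Hg; last by [] ; last by lia.
apply: kval_ext => l hl; rewrite fillrow_out //; [by rewrite ne | ].
by apply/orP; left; apply/eqP; lia.
Qed.

Lemma kk_rec a b : (1 <= a)%N -> (a <= b <= n)%N ->
  kk m lam a b = kval m lam (kk m lam) a b.
Proof. by move=> h1 h2; apply: filltab_rec => //; lia. Qed.

End Fill.
Lemma down_ind (P : nat -> Prop) (i n : nat) :
  P n -> (forall j, (i < j <= n)%N -> P j -> P j.-1) ->
  forall j, (i <= j <= n)%N -> P j.
Proof.
move=> Pn Hs j hj.
have : forall t, (t <= n - i)%N -> P (n - t)%N.
  elim=> [|t IH] ht; first by rewrite subn0.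
  have -> : (n - t.+1 = (n - t).-1)%N by lia.
  by apply: Hs; [lia | apply: IH; lia].
move=> /(_ (n - j)%N); have -> : (n - (n - j) = j)%N by lia.
by apply; lia.
Qed.

Lemma sum_ge0_nat (F : nat -> int) a b :
  (forall l, (a <= l < b)%N -> 0 <= F l) -> 0 <= \sum_(a <= l < b) F l.
Proof.
move=> h; rewrite big_nat_cond; apply: sumr_ge0 => l /andP[hl _]; exact: h.
Qed.

Lemma min_cases (a q : int) :
  (Num.min a q = a /\ a <= q) \/ (Num.min a q = q /\ q < a).
Proof.
by case: (leP a q) => h; [left | right]; split.
Qed.

Lemma ceil_div_le (y z : int) (d : nat) : (0 < d)%N ->
  (Num.ceil ((y%:~R : rat) / d%:R) <= z) = (y <= z * d%:Z).
Proof.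
move=> hd; rewrite ceil_le_int ler_pdivrMr ?ltr0n //.
by rewrite -[d%:R]/((d%:Z)%:~R) -intrM ler_int.
Qed.

Lemma ceil_div_ge (y : int) (d : nat) : (0 < d)%N ->
  y <= Num.ceil ((y%:~R : rat) / d%:R) * d%:Z.
Proof. by move=> hd; rewrite -ceil_div_le. Qed.

Lemma ceil_div1 (y : int) : Num.ceil ((y%:~R : rat) / 1%N%:R) = y.
Proof. by rewrite divr1 intrKceil. Qed.

Section Main.
Variables (n m : nat) (lam : n.-tuple nat).
Hypothesis hm : (0 < m)%N.
Hypothesis hP : inP m lam.

Let K := kk m lam.
Definition rr i j : int := (part lam i)%:Z - \sum_(j.+1 <= l < n.+1) K i l.
Definition cc i j : int := \sum_(i.+1 <= l < j.+1) K l j.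

Lemma K_eq i j : (1 <= i)%N -> (i <= j <= n)%N ->
  K i j = Num.min (m%:Z) (Num.ceil (((rr i j + cc i j)%:~R : rat) / ((j - i + 1)%N%:R))).
Proof. by move=> h1 h2; rewrite /K kk_rec. Qed.

Lemma part_out : part lam n.+1 = 0%N.
Proof. by rewrite /part /= nth_default // size_tuple. Qed.

Lemma lam_mono i : (1 <= i <= n)%N -> (part lam i.+1 <= part lam i)%N.
Proof.
move=> hi; case: (ltnP i n) => h.
  by apply: hP.1; lia.
have -> : i = n by lia.
by rewrite part_out.
Qed.

Definition RS i := (part lam i)%:Z = \sum_(i <= l < n.+1) K i l.
Definition NN i := forall j, (i <= j <= n)%N -> 0 <= K i j.

Lemma RS_out : RS n.+1.
Proof. by rewrite /RS part_out big_geq. Qed.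

Lemma rr_step i j : (j < n)%N -> rr i j = rr i j.+1 - K i j.+1.
Proof.
move=> hj; rewrite /rr (@big_ltn _ _ _ j.+1) // opprD addrA addrAC; reflexivity.
Qed.

Lemma cc_step i j : (i < j)%N -> cc i j = K i.+1 j + cc i.+1 j.
Proof. by move=> h; rewrite /cc big_ltn //; reflexivity. Qed.

Definition LB i j : int := \sum_(i.+1 <= l < j.+1) K i.+1 l.

Lemma LB_step i j : (i <= j)%N -> LB i j.+1 = LB i j + K i.+1 j.+1.
Proof. by move=> h; rewrite /LB big_nat_recr //; reflexivity. Qed.

Lemma rr_LB i j : (i <= j <= n)%N -> RS i.+1 -> rr i.+1 j = LB i j.
Proof.
move=> h; rewrite /RS /rr /LB => ->.
rewrite (@big_cat_nat _ _ _ j.+1) /=; try lia.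
by rewrite addrK.
Qed.

Lemma cc_ii i : cc i i = 0.
Proof. by rewrite /cc big_geq. Qed.

Lemma rr_n i : rr i n = part lam i.
Proof. by rewrite /rr big_geq // subr0. Qed.

Lemma min_le2 (a q : int) : Num.min a q <= a /\ Num.min a q <= q.
Proof. case: (min_cases a q) => [[-> h]|[-> h]]; split => //; exact: ltW. Qed.

Lemma row_step i : (1 <= i <= n)%N -> (forall i', (i < i' <= n)%N -> NN i') ->
  RS i.+1 -> RS i /\ NN i.
Proof.
move=> hi hNN hRS.
have cc_ge0 : forall j, (i <= j <= n)%N -> 0 <= cc i j.
  move=> j hj; apply: sum_ge0_nat => l hl; apply: (hNN l); lia.
have LB_ge0 : forall j, (i <= j <= n)%N -> 0 <= LB i j.
  move=> j hj; apply: sum_ge0_nat => l hl; apply: (hNN i.+1); lia.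
have low : forall j, (i <= j <= n)%N -> LB i j <= rr i j.
  apply: down_ind.
    by rewrite rr_n /LB -hRS lez_nat; apply: lam_mono; lia.
  move=> [|j] hj IH; first by lia.
  rewrite /= rr_step; last by lia.
  rewrite LB_step in IH; last by lia.
  have hK' := @K_eq i.+1 j.+1 isT ltac:(lia).
  have hK := @K_eq i j.+1 ltac:(lia) ltac:(lia).
  rewrite rr_LB in hK'; try lia; last by [].
  rewrite cc_step in hK; last by lia.
  have [hKm hKq] := min_le2 (m%:Z) (Num.ceil (((rr i j.+1 + (K i.+1 j.+1 + cc i.+1 j.+1))%:~R : rat) / ((j.+1 - i + 1)%N%:R))).
  rewrite -hK in hKm hKq.
  case: (min_cases (m%:Z) (Num.ceil (((LB i j.+1 + cc i.+1 j.+1)%:~R : rat) / ((j.+1 - i.+1 + 1)%N%:R)))) => [[e1 e2]|[e1 e2]].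
    rewrite e1 in hK'. lia.
  rewrite e1 in hK'.
  have hq' := (@ceil_div_ge (LB i j.+1 + cc i.+1 j.+1) (j.+1 - i.+1 + 1)%N ltac:(lia)).
  rewrite -hK' LB_step in hq'; last by lia.
  have hq : Num.ceil (((rr i j.+1 + (K i.+1 j.+1 + cc i.+1 j.+1))%:~R : rat) / ((j.+1 - i + 1)%N%:R)) <= rr i j.+1 - LB i j.
    rewrite ceil_div_le; last by lia.
    have hc' : 0 <= cc i.+1 j.+1 by apply: sum_ge0_nat => l hl; apply: (hNN l); lia.
    move: (rr i j.+1) (LB i j) (K i.+1 j.+1) (cc i.+1 j.+1) IH hq' hc' => R L K1 C.
    have -> : (j.+1 - i + 1 = (j.+1 - i.+1 + 1) + 1)%N by lia.
    have : (1 <= j.+1 - i.+1 + 1)%N by lia.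
    move: (j.+1 - i.+1 + 1)%N => e he.
    rewrite PoszD.
    have he' : 1 <= e%:Z by rewrite lez_nat.
    move: (e%:Z) he' => E hE h1 h2 h3.
    nia.
  lia.
have nn : NN i.
  move=> j hj; rewrite (@K_eq i j); try lia.
  have hy : 0 <= rr i j + cc i j.
    have := low j hj; have := LB_ge0 j hj; have := cc_ge0 j hj; lia.
  set q := Num.ceil _.
  have hq : ~~ (q <= -1) by rewrite /q ceil_div_le; lia.
  case: (min_cases m q) => [[-> _]|[-> _]]; lia.
have up : forall j, (i <= j <= n)%N -> rr i j <= m%:Z * (j - i + 1)%N%:Z.
  apply: down_ind.
    by rewrite rr_n -PoszM lez_nat; apply: hP.2; lia.
  move=> [|j] hj IH; first by lia.
  rewrite /= rr_step; last by lia.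
  have hK := @K_eq i j.+1 ltac:(lia) ltac:(lia).
  have hK0 := nn j.+1 ltac:(lia).
  have hc := cc_ge0 j.+1 ltac:(lia).
  have ee : (j.+1 - i + 1 = (j - i + 1) + 1)%N by lia.
  rewrite ee in hK IH.
  have : (1 <= j - i + 1)%N by lia.
  move: (j - i + 1)%N hK IH => e hK IH he.
  case: (min_cases m (Num.ceil (((rr i j.+1 + cc i j.+1)%:~R : rat) / ((e + 1)%N%:R)))) => [[e1 e2]|[e1 e2]].
    rewrite e1 in hK; rewrite hK; rewrite PoszD in IH; lia.
  rewrite e1 in hK.
  have hq := (@ceil_div_ge (rr i j.+1 + cc i j.+1) (e + 1)%N ltac:(lia)).
  rewrite -hK in hq e2.
  rewrite PoszD in hq IH.
  have he' : 1 <= e%:Z by rewrite lez_nat.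
  move: (e%:Z) he' (rr i j.+1) (cc i j.+1) (K i j.+1) hq e2 hK0 hc => E hE R C Q h1 h2 h3 h4.
  nia.
have hii := up i ltac:(lia).
rewrite subnn add0n in hii.
have hKii := @K_eq i i ltac:(lia) ltac:(lia).
rewrite cc_ii subnn add0n addr0 ceil_div1 in hKii.
rewrite min_r in hKii; last by rewrite mulr1 in hii.
split => //.
rewrite /RS big_ltn; last by lia.
rewrite hKii /rr subrK; reflexivity.
Qed.

Lemma all_rows i : (1 <= i <= n)%N -> RS i.
Proof.
move=> hi.
pose Q j := (1 <= j)%N -> RS j /\ (forall i', (j <= i' <= n)%N -> NN i').
suff : Q i by move=> /(_ ltac:(lia)) [].
apply: (@down_ind Q 0 n.+1); try lia.
  move=> _; split; first exact: RS_out.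
  by move=> i' h; lia.
move=> j hj IH h1.
have [h2 h3] := IH ltac:(lia).
have hj1 : j = j.-1.+1 by lia.
rewrite hj1 in h2 h3.
have [r1 r2] := @row_step j.-1 ltac:(lia) (fun i' h => h3 i' ltac:(lia)) h2.
split => // i' h.
case: (eqVneq i' j.-1) => [->|ne] //.
apply: h3; lia.
Qed.

End Main.

Theorem theorem4p2 (n m : nat) (hn : (0 < n)%N) (hm : (0 < m)%N)
  (lam mu : n.-tuple nat) :
  inP m lam -> inP m mu ->
  (forall i j : nat, (1 <= i)%N -> (i <= j)%N -> (j <= n)%N ->
     kk m lam i j = kk m mu i j) ->
  lam = mu.
Proof.
move=> hl hmu hk.
have E : forall i, (1 <= i <= n)%N -> part lam i = part mu i.
  move=> i hi.
  have := @all_rows n m lam hm hl i hi; have := @all_rows n m mu hm hmu i hi.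
  rewrite /RS => e1 e2.
  apply/eqP; rewrite -eqz_nat e1 e2.
  apply/eqP; apply: eq_big_nat => l hl'; apply: hk; lia.
apply: eq_from_tnth => k; rewrite !(tnth_nth 0%N).
have := E k.+1 ltac:(have := ltn_ord k; lia).
by rewrite /part.
Qed.
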